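(* Let $(A,\cdot)$ be a nearly associative algebra over a field $\mathbb{K}$ of characteristic $0$, let $V$ be a linear space and let $l,r:A\to\mathrm{End}(V)$ be linear maps such that $(l,r,V)$ is a bimodule of $(A,\cdot)$. Then the bracket on $A\oplus V$ given by $[x+u,y+v]=(x\cdot y-y\cdot x)+(l(x)-r(x))v-(l(y)-r(y))u$ for $x,y\in A$, $u,v\in V$, is a Lie algebra product on $A\oplus V$.
   Context: An algebra $(A,\cdot)$ is nearly associative if $x\cdot(y\cdot z)=(z\cdot x)\cdot y$ for all $x,y,z\in A$. A triple $(l,r,V)$, with $V$ a linear space and $l,r:A\to\mathrm{End}(V)$ linear, is a bimodule of $(A,\cdot)$ if for all $x,y\in A$: $l(x)l(y)=r(y)r(x)$, $l(x)r(y)=l(y\cdot x)$, and $r(x)l(y)=r(x\cdot y)$. *)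

(* Defs.v *)
From mathcomp Require Import all_boot all_order all_algebra.
Set Implicit Arguments. Unset Strict Implicit. Unset Printing Implicit Defensive.
Import GRing.Theory.
Local Open Scope ring_scope.

Definition bilinear_op (K : fieldType) (W : lmodType K) (op : W -> W -> W) :=
  (forall (a : K) x y z, op (a *: x + y) z = a *: op x z + op y z) /\
  (forall (a : K) x y z, op x (a *: y + z) = a *: op x y + op x z).

Definition nearly_associative (A : Type) (mul : A -> A -> A) :=
  forall x y z, mul x (mul y z) = mul (mul z x) y.

Definition linear_to_End (K : fieldType) (A V : lmodType K) (l : A -> V -> V) :=
  (forall x (a : K) u v, l x (a *: u + v) = a *: l x u + l x v) /\
  (forall (a : K) x y v, l (a *: x + y) v = a *: l x v + l y v).

Definition bimodule (K : fieldType) (A V : lmodType K) (mul : A -> A -> A)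
  (l r : A -> V -> V) :=
  [/\ linear_to_End l, linear_to_End r,
      (forall x y v, l x (l y v) = r y (r x v)),
      (forall x y v, l x (r y v) = l (mul y x) v) &
      (forall x y v, r x (l y v) = r (mul x y) v)].

Definition lie_bracket (K : fieldType) (W : lmodType K) (br : W -> W -> W) :=
  [/\ bilinear_op br,
      (forall x, br x x = 0) &
      (forall x y z, br x (br y z) + br y (br z x) + br z (br x y) = 0)].

Definition sd_bracket (K : fieldType) (A V : lmodType K) (mul : A -> A -> A)
  (l r : A -> V -> V) (p q : A * V) : A * V :=
  (mul p.1 q.1 - mul q.1 p.1,
   (l p.1 q.2 - r p.1 q.2) - (l q.1 p.2 - r q.1 p.2)).

(* Main.v *)
Require Import Defs.
From mathcomp Require Import all_boot all_order all_algebra.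
Local Open Scope ring_scope.
Import GRing.Theory.

Section Lin.
Variables (K : fieldType) (U W : lmodType K) (f : U -> W).
Hypothesis hf : forall (a : K) u v, f (a *: u + v) = a *: f u + f v.
Lemma lD u v : f (u + v) = f u + f v.
Proof. by rewrite -[u in LHS]scale1r hf scale1r. Qed.
Lemma l0 : f 0 = 0.
Proof. have h := lD 0 0; rewrite addr0 in h; by apply: (addrI (f 0)); rewrite -h addr0. Qed.
Lemma lN u : f (- u) = - f u.
Proof. by rewrite -[-u]addr0 -scaleN1r hf l0 addr0 scaleN1r. Qed.
Lemma lB u v : f (u - v) = f u - f v.
Proof. by rewrite lD lN. Qed.
End Lin.

Lemma J1 (V : zmodType) (P Q R S T U : V) :
  ((P - Q) - (R - S)) + ((T - S) - (P - U)) + ((R - U) - (T - Q)) = 0.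
Proof.
rewrite !opprB !addrA.
rewrite (ACl ((1*8)*(2*11)*(3*6)*(4*9)*(5*12)*(7*10))%AC).
by rewrite /= !subrr !addNr !addr0.
Qed.

Lemma J2 (V : zmodType) (P Q R S T U : V) :
  ((P - Q) - (R - S)) + ((R - U) - (T - Q)) + ((T - S) - (P - U)) = 0.
Proof.
rewrite !opprB !addrA.
rewrite (ACl ((1*12)*(2*7)*(3*10)*(4*5)*(6*11)*(8*9))%AC).
by rewrite /= !subrr !addNr !addr0.
Qed.

Lemma J3 (V : zmodType) (a b c d e f : V) :
  ((a - b) - (c - d)) - (((e - b) - (c - f)) - ((f - a) - (d - e))) = 0.
Proof.
rewrite !opprB !addrA.
rewrite (ACl ((1*6)*(2*11)*(3*8)*(4*9)*(5*10)*(7*12))%AC).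
by rewrite /= !subrr !addNr !addr0.
Qed.

Lemma addBACA (V : zmodType) (a b c d : V) : (a + b) - (c + d) = (a - c) + (b - d).
Proof. by rewrite opprD addrACA. Qed.

Lemma subBACA (V : zmodType) (a b c d : V) : (a - b) - (c - d) = (a - c) - (b - d).
Proof. by rewrite !opprB !addrA (ACl (1*4*3*2))%AC. Qed.

Lemma G (K : fieldType) (V : lmodType K) (a : K) (p q r s p' q' r' s' : V) :
  ((a*:p + q) - (a*:r + s)) - ((a*:p' + q') - (a*:r'+s')) =
  a*:((p - r) - (p' - r')) + ((q - s) - (q' - s')).
Proof.
by rewrite !scalerBr [_ - (a *: r + _)]addBACA [_ - (a *: r' + _)]addBACA addBACA.
Qed.

Definition rho_ {A : Type} {V : zmodType} (l r : A -> V -> V) x u := l x u - r x u.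

Theorem mainTheorem4 (K : fieldType) (A V : lmodType K)
  (mul : A -> A -> A) (l r : A -> V -> V) :
  [pchar K] =i pred0 ->
  bilinear_op mul ->
  nearly_associative mul ->
  bimodule mul l r ->
  lie_bracket (sd_bracket mul l r : (A * V)%type -> _ -> _).
Proof.
move=> _ [mL mR] nA [[lR lL] [rR rL] llrr lr rl].
have mDl z x y : mul (x + y) z = mul x z + mul y z by exact: (@lD K A A (mul^~ z) (fun a x y => mL a x y z)).
have mBl z x y : mul (x - y) z = mul x z - mul y z by exact: (@lB K A A (mul^~ z) (fun a x y => mL a x y z)).
have mDr z x y : mul z (x + y) = mul z x + mul z y by exact: (@lD K A A (mul z) (fun a x y => mR a z x y)).
have mBr z x y : mul z (x - y) = mul z x - mul z y by exact: (@lB K A A (mul z) (fun a x y => mR a z x y)).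
have lDr x u v : l x (u + v) = l x u + l x v by exact: (@lD K V V (l x) (lR x)).
have lBr x u v : l x (u - v) = l x u - l x v by exact: (@lB K V V (l x) (lR x)).
have rDr x u v : r x (u + v) = r x u + r x v by exact: (@lD K V V (r x) (rR x)).
have rBr x u v : r x (u - v) = r x u - r x v by exact: (@lB K V V (r x) (rR x)).
have lDl v x y : l (x + y) v = l x v + l y v by exact: (@lD K A V (l^~ v) (fun a x y => lL a x y v)).
have lBl v x y : l (x - y) v = l x v - l y v by exact: (@lB K A V (l^~ v) (fun a x y => lL a x y v)).
have rDl v x y : r (x + y) v = r x v + r y v by exact: (@lD K A V (r^~ v) (fun a x y => rL a x y v)).
have rBl v x y : r (x - y) v = r x v - r y v by exact: (@lB K A V (r^~ v) (fun a x y => rL a x y v)).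
have E x u y v : sd_bracket mul l r (x, u) (y, v) =
   (mul x y - mul y x, rho_ l r x v - rho_ l r y u) by [].
have P2 (a c : A) (b d : V) : (a, b) + (c, d) = (a + c, b + d) by [].
have rhoB x u v : rho_ l r x (u - v) = rho_ l r x u - rho_ l r x v.
  by rewrite /rho_ lBr rBr subBACA.
have key y z u : rho_ l r (mul y z - mul z y) u
    = rho_ l r y (rho_ l r z u) - rho_ l r z (rho_ l r y u).
  rewrite /rho_ lBl rBl !lBr !rBr !llrr !lr !rl.
  by apply/eqP; rewrite -subr_eq0; apply/eqP; apply: J3.
have S1 (a : K) (p : A * V) : (a *: p).1 = a *: p.1 by [].
have S2 (a : K) (p : A * V) : (a *: p).2 = a *: p.2 by [].
split.
- split.
  + move=> a [x u] [y v] [z w]; rewrite /sd_bracket /= ?S1 ?S2.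
    congr pair; rewrite ?S1 ?S2 /=.
      by rewrite mL mR scalerBr addBACA.
    by rewrite lL rL lR rR G.
  + move=> a [x u] [y v] [z w]; rewrite /sd_bracket /= ?S1 ?S2.
    congr pair; rewrite ?S1 ?S2 /=.
      by rewrite mL mR scalerBr addBACA.
    by rewrite lL rL lR rR G.
- by move=> [x u]; rewrite /sd_bracket /= !subrr.
- move=> [x u] [y v] [z w]; rewrite !E.
  move: rhoB key; generalize (rho_ l r) => rho rhoB key /=.
  have -> : (0 : A * V) = (0, 0) by [].
  congr pair.
    rewrite !mBr !mBl !nA; exact: J1.
  rewrite !rhoB !key; exact: J2.
Qed.
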